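(* Let $\Omega\in\mathcal{M}_{n,1}$ with encoded table $(k;a_1,\dots,a_n;b,\beta)$. There is a unique $\overline{\Omega}\in\mathcal{M}_{n,1}$ such that, with $\rho(x,y)=(y-1-x,y)$: the set of junctions of $\overline{\Omega}$ is the image under $\rho$ of the set of junctions of $\Omega$, the start vertex of the $S$-step of $\overline{\Omega}$ is the image under $\rho$ of the start vertex of the $S$-step of $\Omega$, and the end vertex of the $N$-step of $\overline{\Omega}$ is the image under $\rho$ of the end vertex of the $N$-step of $\Omega$. The table $(k;\overline{a}_1,\dots,\overline{a}_n;\overline{b},\overline{\beta})$ encoded by $\overline{\Omega}$ (with the same $k$) is given by $\overline{a}_i=i-1-a_i$ for $i\ne k-1$, $\overline{a}_{k-1}=k-2-a_k-b$, $\overline{b}=a_k-1-a_{k-1}$, $\overline{\beta}=a_k+b-a_{k-1}-\beta-1$.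
   Context: Mixed configurations: let $\mathcal{G}_n=\{(x,y)\in\mathbb{Z}^2: 0\le x<y\le n\}$. Steps are $E=(1,0)$, $F=(1,0)$ (a distinct letter from $E$ with the same displacement), $S=(0,-1)$, $N=(1,1)$. A mixed path is a lattice path all of whose vertices lie in $\mathcal{G}_n$, given as a word $LR$ where the Left part $L$ is a word in $\{S,E\}$ and the Right part $R$ is a word in $\{F,N\}$; the vertex where $L$ ends and $R$ begins is the junction. An order-$n$ mixed configuration is a sequence $(\omega_1,\dots,\omega_n)$ of mixed paths such that for some permutation $\sigma$ of $\{1,\dots,n\}$, $\omega_i$ starts at $(0,i)$ and ends at $(\sigma(i)-1,\sigma(i))$, the Left parts are pairwise vertex-disjoint, and the Right parts are pairwise vertex-disjoint. $\mathcal{M}_{n,s}$ is the set of order-$n$ mixed configurations containing exactly $s$ $N$-steps in total (an element of $\mathcal{M}_{n,1}$ then has exactly one $S$-step as well). Every $\Omega=(\omega_1,\dots,\omega_n)\in\mathcal{M}_{n,1}$ can be written uniquely in the form $\omega_i=E^{a_i}F^{i-1-a_i}$ for $i\notin\{k-1,k\}$, $\omega_{k-1}=E^{a_{k-1}}F^{\beta}NF^{k-2-a_{k-1}-\beta}$, $\omega_k=E^{a_k}SE^{b}F^{k-2-a_k-b}$, for non-negative integers $k,a_1,\dots,a_n,b,\beta$ (exponents denote repetition of steps); the sequence $(k;a_1,\dots,a_n;b,\beta)$ is called the table encoded by $\Omega$. *)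

(* Defs.v *)
From HB Require Import structures.
From mathcomp Require Import all_boot all_order all_algebra all_fingroup.
Set Implicit Arguments. Unset Strict Implicit. Unset Printing Implicit Defensive.
Import Order.TTheory GRing.Theory Num.Theory.
Local Open Scope ring_scope.

Inductive step := E | F | S | N.

Definition is_SE (s : step) : bool := match s with E | S => true | _ => false end.
Definition is_FN (s : step) : bool := match s with F | N => true | _ => false end.
Definition is_S (s : step) : bool := if s is S then true else false.
Definition is_N (s : step) : bool := if s is N then true else false.

Definition point := (int * int)%type.

Definition dx (s : step) : int := match s with E | F | N => 1 | S => 0 end.
Definition dy (s : step) : int := match s with E | F => 0 | S => -1 | N => 1 end.

Definition move (p : point) (s : step) : point := (p.1 + dx s, p.2 + dy s).

Definition endpt (p : point) (w : seq step) : point := foldl move p w.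
Definition verts (p : point) (w : seq step) : seq point := p :: scanl move p w.

Fixpoint sstarts (p : point) (w : seq step) : seq point :=
  if w is s :: w' then (if is_S s then [:: p] else [::]) ++ sstarts (move p s) w'
  else [::].
Fixpoint nends (p : point) (w : seq step) : seq point :=
  if w is s :: w' then (if is_N s then [:: move p s] else [::]) ++ nends (move p s) w'
  else [::].

(* a word L R with L in {S,E}^* and R in {F,N}^*; the split is at the
   first F/N letter *)
Definition split_idx (w : seq step) : nat := find is_FN w.
Definition mixed_word (w : seq step) : bool := all is_FN (drop (split_idx w) w).
Definition junction (p : point) (w : seq step) : point := endpt p (take (split_idx w) w).
Definition left_verts (p : point) (w : seq step) : seq point :=
  verts p (take (split_idx w) w).
Definition right_verts (p : point) (w : seq step) : seq point :=
  verts (junction p w) (drop (split_idx w) w).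

Definition in_grid (n : nat) (p : point) : bool := (0 <= p.1) && (p.1 < p.2) && (p.2 <= n%:Z).

Definition path (Om : seq (seq step)) (i : nat) : seq step := nth [::] Om i.-1.
Definition start (i : nat) : point := (0, i%:Z).

Definition mixed_config (n : nat) (Om : seq (seq step)) : Prop :=
  [/\ size Om = n,
      (forall i : nat, (1 <= i <= n)%N ->
          mixed_word (path Om i) /\ all (in_grid n) (verts (start i) (path Om i))),
      (exists sigma : {perm 'I_n}, forall i : 'I_n,
          endpt (start i.+1) (path Om i.+1) = ((sigma i)%:Z, (sigma i).+1%:Z)),
      (forall i j : nat, (1 <= i <= n)%N -> (1 <= j <= n)%N -> i != j ->
          ~~ has (mem (left_verts (start j) (path Om j))) (left_verts (start i) (path Om i)))
    & (forall i j : nat, (1 <= i <= n)%N -> (1 <= j <= n)%N -> i != j ->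
          ~~ has (mem (right_verts (start j) (path Om j))) (right_verts (start i) (path Om i)))].

Definition M (n s : nat) (Om : seq (seq step)) : Prop :=
  mixed_config n Om /\ sumn (map (count is_N) Om) = s.

Definition junctions (Om : seq (seq step)) : seq point :=
  [seq junction (start i) (path Om i) | i <- iota 1 (size Om)].
Definition all_sstarts (Om : seq (seq step)) : seq point :=
  flatten [seq sstarts (start i) (path Om i) | i <- iota 1 (size Om)].
Definition all_nends (Om : seq (seq step)) : seq point :=
  flatten [seq nends (start i) (path Om i) | i <- iota 1 (size Om)].

Definition encodes (n : nat) (Om : seq (seq step)) (k : nat) (a : nat -> nat)
    (b beta : nat) : Prop :=
  [/\ (1 < k <= n)%N,
      (forall i : nat, (1 <= i <= n)%N -> i != k.-1 -> i != k ->
         (a i <= i.-1)%N /\ path Om i = nseq (a i) E ++ nseq (i.-1 - a i) F),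
      (a k.-1 + beta <= k.-2)%N /\
        path Om k.-1 = nseq (a k.-1) E ++ nseq beta F ++ N :: nseq (k.-2 - a k.-1 - beta) F
    & (a k + b <= k.-2)%N /\
        path Om k = nseq (a k) E ++ S :: nseq b E ++ nseq (k.-2 - a k - b) F].

Definition rho (p : point) : point := (p.2 - 1 - p.1, p.2).

Definition rho_related (Om Omb : seq (seq step)) : Prop :=
  [/\ junctions Omb =i map rho (junctions Om),
      all_sstarts Omb =i map rho (all_sstarts Om)
    & all_nends Omb =i map rho (all_nends Om)].

(* Main.v *)
Require Import Defs.
From HB Require Import structures.
From mathcomp Require Import all_boot all_order all_algebra all_fingroup.
From mathcomp Require Import zify.
Import Order.TTheory GRing.Theory Num.Theory.
Local Open Scope ring_scope.



Definition step_eqb (s t : step) : bool :=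
  match s, t with E, E | F, F | S, S | N, N => true | _, _ => false end.
Lemma step_eqP : Equality.axiom step_eqb.
Proof. by case; case; constructor. Qed.
HB.instance Definition _ := hasDecEq.Build step step_eqP.

Lemma verts_cons p s w : verts p (s :: w) = p :: verts (move p s) w.
Proof. by []. Qed.
Lemma endpt_cons p s w : endpt p (s :: w) = endpt (move p s) w.
Proof. by []. Qed.
Lemma endpt_cat p u v : endpt p (u ++ v) = endpt (endpt p u) v.
Proof. by rewrite /endpt foldl_cat. Qed.
Lemma endpt_in p u : endpt p u \in verts p u.
Proof.
elim: u p => [|s u IH] p; first by rewrite inE.
by rewrite verts_cons endpt_cons inE IH orbT.
Qed.
Lemma mem_verts_cons q p s w :
  (q \in verts p (s :: w)) = (q == p) || (q \in verts (move p s) w).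
Proof. by rewrite verts_cons [in LHS]inE. Qed.
Lemma mem_verts_cat q p u v :
  (q \in verts p (u ++ v)) = (q \in verts p u) || (q \in verts (endpt p u) v).
Proof.
elim: u p => [|s u IH] p /=.
  by rewrite /verts /= !inE; case: (q =P p) => // ->; rewrite eqxx.
by rewrite !mem_verts_cons IH orbA.
Qed.
Lemma mem_verts_nil q p : (q \in verts p [::]) = (q == p).
Proof. by rewrite /verts /= inE. Qed.

Definition horiz (s : step) := (s == E) || (s == F).

Lemma mem_verts_run s m (x y x0 y0 : int) : horiz s ->
  ((x, y) \in verts (x0, y0) (nseq m s)) = (y == y0) && (x0 <= x <= x0 + m%:Z).
Proof.
move=> hs; elim: m x0 => [|m IH] x0 /=.
  rewrite mem_verts_nil xpair_eqE; lia.
rewrite mem_verts_cons /move /=.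
have -> : dx s = 1 by case/orP: hs => /eqP->.
have -> : dy s = 0 by case/orP: hs => /eqP->.
rewrite addr0 IH xpair_eqE; lia.
Qed.

Lemma endpt_run s m (x0 y0 : int) : horiz s ->
  endpt (x0, y0) (nseq m s) = (x0 + m%:Z, y0).
Proof.
move=> hs; elim: m x0 => [|m IH] x0; first by rewrite /endpt /= addr0.
rewrite -[nseq m.+1 s]/(s :: nseq m s) endpt_cons /move /=.
have -> : dx s = 1 by case/orP: hs => /eqP->.
have -> : dy s = 0 by case/orP: hs => /eqP->.
rewrite addr0 IH; congr pair; lia.
Qed.

Lemma endpt_gen w (x0 y0 : int) :
  endpt (x0, y0) w = (x0 + (count (predC is_S) w)%:Z,
                      y0 + (count is_N w)%:Z - (count is_S w)%:Z).
Proof.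
elim: w x0 y0 => [|s w IH] x0 y0; first by rewrite /endpt /=; congr pair; lia.
rewrite endpt_cons /move /= IH; case: s => /=; congr pair; lia.
Qed.

Lemma find_FN_cat L R : all is_SE L -> find is_FN (L ++ R) = (size L + find is_FN R)%N.
Proof. by elim: L => [|s L IH] //=; case: s => //= /IH ->. Qed.

Lemma find_FN_R R : all is_FN R -> find is_FN R = 0%N.
Proof. by case: R => [|s R] //=; case: s. Qed.

Lemma split_LR L R : all is_SE L -> all is_FN R -> split_idx (L ++ R) = size L.
Proof. by move=> hL hR; rewrite /split_idx find_FN_cat // find_FN_R // addn0. Qed.

Lemma LR_props p L R : all is_SE L -> all is_FN R ->
  [/\ left_verts p (L ++ R) = verts p L, right_verts p (L ++ R) = verts (endpt p L) R,
      junction p (L ++ R) = endpt p L & mixed_word (L ++ R)].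
Proof.
move=> hL hR.
rewrite /left_verts /right_verts /junction /mixed_word split_LR //.
by rewrite take_size_cat // drop_size_cat.
Qed.

Lemma mixed_LR w : mixed_word w -> exists L R, [/\ w = L ++ R, all is_SE L & all is_FN R].
Proof.
rewrite /mixed_word /split_idx => h; exists (take (find is_FN w) w), (drop (find is_FN w) w).
split => //; first by rewrite cat_take_drop.
elim: w {h} => [|s w IH] //=; case: s => //=.
Qed.

Lemma SE0 L : all is_SE L -> count is_S L = 0%N -> L = nseq (size L) E.
Proof. by elim: L => [|s L IH] //=; case: s => //= h1 h2; rewrite -IH. Qed.

Lemma SE1 L : all is_SE L -> count is_S L = 1%N -> exists a b, L = nseq a E ++ S :: nseq b E.
Proof.
elim: L => [|s L IH] //=; case: s => //= h1 h2.
  have [a [b ->]] := IH h1 h2. by exists a.+1, b.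
by exists 0%N, (size L); rewrite /= -SE0 //; move: h2; rewrite add1n => -[].
Qed.

Lemma FN0 R : all is_FN R -> count is_N R = 0%N -> R = nseq (size R) F.
Proof. by elim: R => [|s R IH] //=; case: s => //= h1 h2; rewrite -IH. Qed.

Lemma FN1 R : all is_FN R -> count is_N R = 1%N -> exists a b, R = nseq a F ++ N :: nseq b F.
Proof.
elim: R => [|s R IH] //=; case: s => //= h1 h2.
  have [a [b ->]] := IH h1 h2. by exists a.+1, b.
by exists 0%N, (size R); rewrite /= -FN0 //; move: h2; rewrite add1n => -[].
Qed.

Lemma cS_R R : all is_FN R -> count is_S R = 0%N.
Proof. by elim: R => [|s R IH] //=; case: s => //= /IH ->. Qed.
Lemma cN_L L : all is_SE L -> count is_N L = 0%N.
Proof. by elim: L => [|s L IH] //=; case: s => //= /IH ->. Qed.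

Lemma sstarts_cat p u v : sstarts p (u ++ v) = sstarts p u ++ sstarts (endpt p u) v.
Proof. by elim: u p => [|s u IH] p //=; rewrite IH catA. Qed.
Lemma nends_cat p u v : nends p (u ++ v) = nends p u ++ nends (endpt p u) v.
Proof. by elim: u p => [|s u IH] p //=; rewrite IH catA. Qed.
Lemma sstarts_run p s m : horiz s -> sstarts p (nseq m s) = [::].
Proof. by move=> hs; elim: m p => [|m IH] p //=; rewrite IH; case/orP: hs => /eqP->. Qed.
Lemma nends_run p s m : horiz s -> nends p (nseq m s) = [::].
Proof. by move=> hs; elim: m p => [|m IH] p //=; rewrite IH; case/orP: hs => /eqP->. Qed.

Lemma mem_verts_LR q p w : mixed_word w ->
  (q \in verts p w) = (q \in left_verts p w) || (q \in right_verts p w).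
Proof.
move=> /mixed_LR [L [R [-> hL hR]]]; have [-> -> _ _] := LR_props p _ _ hL hR.
by rewrite mem_verts_cat.
Qed.

Definition wn a c := nseq a E ++ nseq c F.
Definition wN a be d := nseq a E ++ nseq be F ++ N :: nseq d F.
Definition wS a b c := nseq a E ++ S :: nseq b E ++ nseq c F.

Lemma hE : horiz E. Proof. by []. Qed.
Lemma hF : horiz F. Proof. by []. Qed.
Lemma allE a : all is_SE (nseq a E). Proof. by elim: a. Qed.
Lemma allF a : all is_FN (nseq a F). Proof. by elim: a. Qed.

Lemma wn_props a c (y0 : int) : let w := wn a c in let p := ((0:int), y0) in
  [/\ forall x y : int, ((x,y) \in left_verts p w) = (y == y0) && (0 <= x <= a%:Z),
      forall x y : int, ((x,y) \in right_verts p w) = (y == y0) && (a%:Z <= x <= (a + c)%:Z),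
      junction p w = (a%:Z, y0), endpt p w = ((a + c)%:Z, y0) &
      [/\ mixed_word w, sstarts p w = [::], nends p w = [::] & count is_N w = 0%N]].
Proof.
have [hl hr hj hm] := LR_props (0, y0) _ _ (allE a) (allF c).
rewrite /wn hl hr hj endpt_run // add0r; split => //.
- by move=> x y; rewrite mem_verts_run //; lia.
- by move=> x y; rewrite mem_verts_run //; lia.
- by rewrite endpt_cat !endpt_run // add0r; congr pair; lia.
split => //; first by rewrite sstarts_cat !sstarts_run.
  by rewrite nends_cat !nends_run.
by rewrite count_cat !count_nseq.
Qed.

Lemma wN_props a be d (y0 : int) : let w := wN a be d in let p := ((0:int), y0) in
  [/\ forall x y : int, ((x,y) \in left_verts p w) = (y == y0) && (0 <= x <= a%:Z),
      forall x y : int, ((x,y) \in right_verts p w) =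
         ((y == y0) && (a%:Z <= x <= (a + be)%:Z)) ||
         ((y == y0 + 1) && ((a + be).+1%:Z <= x <= (a + be + d).+1%:Z)),
      junction p w = (a%:Z, y0), endpt p w = ((a + be + d).+1%:Z, y0 + 1) &
      [/\ mixed_word w, sstarts p w = [::], nends p w = [:: ((a+be).+1%:Z, y0 + 1)]
        & count is_N w = 1%N]].
Proof.
have hR : all is_FN (nseq be F ++ N :: nseq d F) by rewrite all_cat allF /= allF.
have [hl hr hj hm] := LR_props (0, y0) _ _ (allE a) hR.
rewrite /wN hl hr hj endpt_run // add0r; split => //.
- by move=> x y; rewrite mem_verts_run //; lia.
- move=> x y; rewrite mem_verts_cat mem_verts_run // endpt_run // mem_verts_cons.
  rewrite /move /= mem_verts_run // xpair_eqE; lia.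
- by rewrite !endpt_cat !endpt_run // endpt_cons /move /= endpt_run // add0r; congr pair; lia.
split => //; first by rewrite sstarts_cat !sstarts_run // sstarts_cat sstarts_run //= sstarts_run.
  rewrite nends_cat !nends_run // nends_cat nends_run //= nends_run // endpt_run //.
  by rewrite /move /= add0r endpt_run //=; congr (cons (_, _) _); lia.
by rewrite count_cat !count_cat !count_nseq /= count_nseq.
Qed.

Lemma wS_props a b c (y0 : int) : let w := wS a b c in let p := ((0:int), y0) in
  [/\ forall x y : int, ((x,y) \in left_verts p w) =
         ((y == y0) && (0 <= x <= a%:Z)) || ((y == y0 - 1) && (a%:Z <= x <= (a + b)%:Z)),
      forall x y : int, ((x,y) \in right_verts p w) = (y == y0 - 1) && ((a + b)%:Z <= x <= (a + b + c)%:Z),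
      junction p w = ((a + b)%:Z, y0 - 1), endpt p w = ((a + b + c)%:Z, y0 - 1) &
      [/\ mixed_word w, sstarts p w = [:: (a%:Z, y0)], nends p w = [::] & count is_N w = 0%N]].
Proof.
move=> w p; subst w p.
have hL : all is_SE (nseq a E ++ S :: nseq b E) by rewrite all_cat allE /= allE.
have [hl hr hj hm] := LR_props (0, y0) _ _ hL (allF c).
have ew : wS a b c = (nseq a E ++ S :: nseq b E) ++ nseq c F by rewrite /wS -catA.
have eL : endpt (0, y0) (nseq a E ++ S :: nseq b E) = ((a + b)%:Z, y0 - 1).
  rewrite endpt_cat endpt_run // endpt_cons /move /= endpt_run //; congr pair; lia.
rewrite ew hl hr hj eL; split => //.
- move=> x y; rewrite mem_verts_cat mem_verts_run // endpt_run // mem_verts_cons.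
  rewrite /move /= mem_verts_run // xpair_eqE; lia.
- by move=> x y; rewrite mem_verts_run //; lia.
- by rewrite endpt_cat eL endpt_run //; congr pair; lia.
split; first by [].
- by rewrite sstarts_cat sstarts_run //= sstarts_cat sstarts_run //= sstarts_run // endpt_run // add0r.
- by rewrite nends_cat nends_run //= nends_cat nends_run //= nends_run.
by rewrite count_cat !count_cat !count_nseq /= count_nseq.
Qed.

Definition cw k (a : nat -> nat) b be i :=
  if i == k.-1 then wN (a i) be (k.-2 - a i - be)
  else if i == k then wS (a i) b (k.-2 - a i - b)
  else wn (a i) (i.-1 - a i).
Definition cfg n k a b be := [seq cw k a b be i | i <- iota 1 n].

Lemma size_cfg n k a b be : size (cfg n k a b be) = n.
Proof. by rewrite size_map size_iota. Qed.

Lemma path_cfg n k a b be i : (1 <= i <= n)%N -> Defs.path (cfg n k a b be) i = cw k a b be i.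
Proof.
case/andP => h1 h2; rewrite /Defs.path /cfg (nth_map 0%N) ?size_iota; last by lia.
by rewrite nth_iota; [congr cw; lia | lia].
Qed.

Definition basic n k (a : nat -> nat) b be : Prop :=
 [/\ (1 < k <= n)%N, (forall i, (1 <= i <= n)%N -> i != k.-1 -> i != k -> (a i <= i.-1)%N),
     (a k.-1 + be <= k.-2)%N & (a k + b <= k.-2)%N].

Lemma encodes_cfg n Om k a b be : size Om = n -> encodes n Om k a b be ->
  Om = cfg n k a b be /\ basic n k a b be.
Proof.
move=> hs [hk hi [hb1 hp1] [hb2 hp2]]; split; last first.
  by split => // i hi1 hi2 hi3; have [] := hi i hi1 hi2 hi3.
apply: (eq_from_nth (x0:=[::])); first by rewrite size_cfg.
move=> j hj; have hj' : (1 <= j.+1 <= n)%N by lia.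
have -> : nth [::] (cfg n k a b be) j = Defs.path (cfg n k a b be) j.+1 by [].
rewrite path_cfg // /cw -/(Defs.path Om j.+1).
case: ifP => [/eqP e|h1]; first by rewrite e hp1.
case: ifP => [/eqP e|h2]; first by rewrite e hp2.
by have [] := hi j.+1 hj' (negbT h1) (negbT h2).
Qed.

Lemma cfg_ext n k a a' b be : (forall i, (1 <= i <= n)%N -> a i = a' i) ->
  cfg n k a b be = cfg n k a' b be.
Proof.
move=> h; apply/eq_in_map => i; rewrite mem_iota => hi.
by rewrite /cw !h //; lia.
Qed.

Lemma cfg_props n k a b be i : basic n k a b be -> (1 <= i <= n)%N ->
 let w := Defs.path (cfg n k a b be) i in let p := start i in
 [/\ forall x y : int, ((x,y) \in left_verts p w) =
       (if i == k then ((y == i%:Z) && (0 <= x <= (a i)%:Z)) ||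
                       ((y == i%:Z - 1) && ((a i)%:Z <= x <= (a i + b)%:Z))
        else (y == i%:Z) && (0 <= x <= (a i)%:Z)),
     forall x y : int, ((x,y) \in right_verts p w) =
       (if i == k.-1 then ((y == i%:Z) && ((a i)%:Z <= x <= (a i + be)%:Z)) ||
                          ((y == i%:Z + 1) && ((a i + be).+1%:Z <= x <= k%:Z - 1))
        else if i == k then (y == i%:Z - 1) && ((a i + b)%:Z <= x <= k%:Z - 2)
        else (y == i%:Z) && ((a i)%:Z <= x <= i%:Z - 1)),
     junction p w = (if i == k then ((a i + b)%:Z, i%:Z - 1) else ((a i)%:Z, i%:Z)),
     endpt p w = (if i == k.-1 then (k%:Z - 1, k%:Z)
                  else if i == k then (k%:Z - 2, k%:Z - 1) else (i%:Z - 1, i%:Z)) &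
     [/\ mixed_word w, sstarts p w = (if i == k then [:: ((a i)%:Z, i%:Z)] else [::]),
         nends p w = (if i == k.-1 then [:: ((a i + be).+1%:Z, i%:Z + 1)] else [::])
       & count is_N w = (i == k.-1)]].
Proof.
move=> [hk hai hb1 hb2] hi w p; subst w p; rewrite path_cfg // /cw /start.
case: ifP => [/eqP e|h1].
  have -> : (i == k) = false by apply/negbTE; lia.
  have [l r j en [m s nn cn]] := wN_props (a i) be (k.-2 - a i - be) i%:Z.
  rewrite e in l r j en s nn cn m *.
  split => //.
  - by move=> x y; rewrite r; lia.
  - by rewrite en; congr pair; lia.
case: ifP => [/eqP e|h2].
  have [l r j en [m s nn cn]] := wS_props (a i) b (k.-2 - a i - b) i%:Z.
  rewrite e in l r j en s nn cn m *.
  split => //.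
  - by move=> x y; rewrite r; lia.
  - by rewrite en; congr pair; lia.
have := hai i hi (negbT h1) (negbT h2) => hai'.
have [l r j en [m s nn cn]] := wn_props (a i) (i.-1 - a i) i%:Z.
split => //.
- by move=> x y; rewrite r; lia.
- by rewrite en; congr pair; lia.
Qed.

Lemma use_eq (b c : bool) : b = c -> c -> b.
Proof. by move=> ->. Qed.

Lemma strict_of n k a b be : basic n k a b be -> mixed_config n (cfg n k a b be) ->
  (a k.-1 < a k)%N /\ (a k.-1 + be < a k + b)%N.
Proof.
move=> hb [_ _ _ HL HR]; case: (hb) => /andP[hk1 hk2] _ hb3 hb4.
have r1 : (1 <= k.-1 <= n)%N by lia.
have r2 : (1 <= k <= n)%N by lia.
have ne : k.-1 != k by lia.
have [l1 r1' _ _ _] := @cfg_props n k a b be k.-1 hb r1.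
have [l2 r2' _ _ _] := @cfg_props n k a b be k hb r2.
have e1 : (k.-1 == k.-1) = true by rewrite eqxx.
have e2 : (k.-1 == k) = false by apply/negbTE.
have e3 : (k == k) = true by rewrite eqxx.
have e4 : (k == k.-1) = false by apply/negbTE; lia.
have A : (a k.-1 < a k)%N.
  rewrite ltnNge; apply/negP => h.
  move/hasPn: (HL _ _ r1 r2 ne) => /(_ ((a k)%:Z, k%:Z - 1)).
  rewrite l1 e2 /= => H; have := H ltac:(lia); move/negP; apply.
  rewrite l2 e3 /=; lia.
split => //.
rewrite ltnNge; apply/negP => h.
move/hasPn: (HR _ _ r1 r2 ne) => /(_ ((a k + b)%:Z, k%:Z - 1)).
rewrite r1' e1 /= => H; have := H ltac:(lia); move/negP; apply.
by rewrite r2' e3 e4 /=; lia.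
Qed.

Lemma cfg_M n k a b be : basic n k a b be -> (a k.-1 < a k)%N -> (a k.-1 + be < a k + b)%N ->
  M n 1 (cfg n k a b be).
Proof.
move=> hb s1 s2; case: (hb) => /andP[hk1 hk2] hai hb3 hb4.
split; last first.
  rewrite /cfg -map_comp.
  rewrite (eq_in_map _ (fun i => nat_of_bool (i == k.-1)) (iota 1 n)).1; last first.
    move=> i; rewrite mem_iota => hi.
    have hi' : (1 <= i <= n)%N by lia.
    have [_ _ _ _ [_ _ _ c]] := @cfg_props n k a b be i hb hi'.
    by rewrite /= -c path_cfg.
  rewrite (sumn_count (pred1 k.-1)) count_uniq_mem ?iota_uniq // mem_iota; lia.
split.
- exact: size_cfg.
- move=> i hi; have [l r _ _ [m _ _ _]] := @cfg_props n k a b be i hb hi.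
  split => //; apply/allP => -[x y]; rewrite mem_verts_LR // l r /in_grid /=.
  have := hai i hi.
  have f1 : i == k.-1 -> a i = a k.-1 by move/eqP->.
  have f2 : i == k -> a i = a k by move/eqP->.
  by case: (boolP (i == k.-1)) => e1; case: (boolP (i == k)) => e2 /=; lia.
- have hk2' : (k.-2 < n)%N by lia.
  have hk1' : (k.-1 < n)%N by lia.
  exists (tperm (Ordinal hk2') (Ordinal hk1')) => j.
  have hj : (1 <= j.+1 <= n)%N by have := ltn_ord j; lia.
  have [_ _ _ en _] := @cfg_props n k a b be j.+1 hb hj; rewrite en.
  case: tpermP => [->|->|h1 h2] /=.
  + have -> : (k.-2.+1 == k.-1) = true by apply/eqP; lia.
    congr pair; lia.
  + have -> : (k.-1.+1 == k.-1) = false by apply/negbTE; lia.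
    have -> : (k.-1.+1 == k) = true by apply/eqP; lia.
    congr pair; lia.
  + have n1 : (j : nat) != k.-2 by apply/eqP => e; apply: h1; apply: val_inj.
    have n2 : (j : nat) != k.-1 by apply/eqP => e; apply: h2; apply: val_inj.
    have -> : (j.+1 == k.-1) = false by apply/negbTE; lia.
    have -> : (j.+1 == k) = false by apply/negbTE; lia.
    congr pair; lia.
- move=> i j hi hj nij; apply/hasPn => -[x y] hin.
  have [l1 _ _ _ _] := @cfg_props n k a b be i hb hi.
  have [l2 _ _ _ _] := @cfg_props n k a b be j hb hj.
  move: hin; rewrite l1 inE l2.
  have := hai i hi; have := hai j hj.
  have f1 : i == k.-1 -> a i = a k.-1 by move/eqP->.
  have f2 : i == k -> a i = a k by move/eqP->.
  have f3 : j == k.-1 -> a j = a k.-1 by move/eqP->.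
  have f4 : j == k -> a j = a k by move/eqP->.
  by case: (boolP (i == k.-1)) => e1; case: (boolP (i == k)) => e2; case: (boolP (j == k.-1)) => e3; case: (boolP (j == k)) => e4 /=; lia.
- move=> i j hi hj nij; apply/hasPn => -[x y] hin.
  have [_ l1 _ _ _] := @cfg_props n k a b be i hb hi.
  have [_ l2 _ _ _] := @cfg_props n k a b be j hb hj.
  move: hin; rewrite l1 inE l2.
  have := hai i hi; have := hai j hj.
  have f1 : i == k.-1 -> a i = a k.-1 by move/eqP->.
  have f2 : i == k -> a i = a k by move/eqP->.
  have f3 : j == k.-1 -> a j = a k.-1 by move/eqP->.
  have f4 : j == k -> a j = a k by move/eqP->.
  by case: (boolP (i == k.-1)) => e1; case: (boolP (i == k)) => e2; case: (boolP (j == k.-1)) => e3; case: (boolP (j == k)) => e4 /=; lia.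
Qed.



Lemma sum1 n (F : 'I_n -> nat) : (\sum_(j < n) F j = 1)%N ->
  exists p, F p = 1%N /\ forall j, j != p -> F j = 0%N.
Proof.
move=> h.
have [p hp] : exists p, (0 < F p)%N.
  case: (pickP (fun j => 0 < F j)%N) => [p hp|h0]; first by exists p.
  move: h; rewrite big1 // => j _; have := h0 j; rewrite /=; lia.
exists p; move: h; rewrite (bigD1 p) //= => h.
split; first lia.
move=> j hj; move: h; set X := bigop _ _ _ => h.
have : X = 0%N by lia.
by move/eqP; rewrite sum_nat_eq0 => /forallP /(_ j); rewrite hj /= => /eqP.
Qed.

Definition lead (w : seq step) := find (fun s => s != E) w.

Lemma lead_cat a r : lead (nseq a E ++ r) = (a + lead r)%N.
Proof. by elim: a => //= a ->. Qed.
Lemma lead_wn a c : lead (wn a c) = a.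
Proof. by rewrite /wn lead_cat; case: c => [|c]; rewrite addn0. Qed.
Lemma lead_wN a be d : lead (wN a be d) = a.
Proof. by rewrite /wN lead_cat; case: be => [|c]; rewrite addn0. Qed.
Lemma lead_wS a b c : lead (wS a b c) = a.
Proof. by rewrite /wS lead_cat addn0. Qed.

Lemma start_in p w : p \in verts p w.
Proof. by rewrite /verts inE eqxx. Qed.

Lemma SN_facts a b c d (y0 : int) :
  let L := nseq a E ++ S :: nseq b E in let R := nseq c F ++ N :: nseq d F in
  [/\ ((a%:Z, y0 - 1) : int * int) \in left_verts ((0:int), y0) (L ++ R),
      (((a + b)%:Z, y0 - 1) : int * int) \in right_verts ((0:int), y0) (L ++ R) &
      endpt ((0:int), y0) (L ++ R) = ((a + b + c + d).+1%:Z, y0)].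
Proof.
move=> L R.
have hL : all is_SE L by rewrite all_cat allE /= allE.
have hR : all is_FN R by rewrite all_cat allF /= allF.
have eL : endpt (0, y0) L = ((a + b)%:Z, y0 - 1).
  rewrite endpt_cat endpt_run // endpt_cons /move /= endpt_run //; congr pair; lia.
have [-> -> _ _] := LR_props (0, y0) _ _ hL hR.
split.
- rewrite mem_verts_cat mem_verts_cons endpt_run // /move /= add0r addr0.
  by rewrite start_in !orbT.
- by rewrite eL start_in.
rewrite endpt_cat eL endpt_cat endpt_run // endpt_cons /move /= endpt_run //.
congr pair; lia.
Qed.

Lemma structure n Om : M n 1 Om ->
  exists k a b be, basic n k a b be /\ Om = cfg n k a b be.
Proof.
move=> [[hs hmix [sg hsg] HL HR] hsum].
have hy : forall j : 'I_n, (j.+1 + count is_N (Defs.path Om j.+1) =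
                            (sg j).+1 + count is_S (Defs.path Om j.+1))%N.
  move=> j; move: (hsg j); rewrite /start endpt_gen => -[_ e]; lia.
have hsN : (\sum_(j < n) count is_N (Defs.path Om j.+1) = 1)%N.
  rewrite -hsum sumnE big_map (big_nth [::]) hs big_mkord.
  by apply: eq_bigr.
have hsS : (\sum_(j < n) count is_S (Defs.path Om j.+1) = 1)%N.
  have : (\sum_(j < n) (j.+1 + count is_N (Defs.path Om j.+1)) =
          \sum_(j < n) ((sg j).+1 + count is_S (Defs.path Om j.+1)))%N.
    by apply: eq_bigr => j _; exact: hy.
  rewrite !big_split /= hsN.
  have -> : (\sum_(j < n) (sg j).+1 = \sum_(j < n) j.+1)%N.
    by rewrite [RHS](reindex_inj (@perm_inj _ sg)).
  by move/eqP; rewrite eqn_add2l => /eqP <-.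
have [p [hp1 hp0]] := sum1 _ _ hsN.
have [q [hq1 hq0]] := sum1 _ _ hsS.
have toOrd : forall i, (1 <= i <= n)%N -> exists j : 'I_n, (j : nat).+1 = i.
  move=> i hi; have h : (i.-1 < n)%N by lia.
  by exists (Ordinal h) => /=; lia.
have cN : forall i, (1 <= i <= n)%N -> count is_N (Defs.path Om i) = (i == p.+1).
  move=> i /toOrd [j <-]; rewrite eqSS.
  case: (eqVneq j p) => [->|ne]; first by rewrite eqxx hp1.
  by rewrite hp0 // (_ : ((j : nat) == p) = false) //; exact: negbTE ne.
have cS : forall i, (1 <= i <= n)%N -> count is_S (Defs.path Om i) = (i == q.+1).
  move=> i /toOrd [j <-]; rewrite eqSS.
  case: (eqVneq j q) => [->|ne]; first by rewrite eqxx hq1.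
  by rewrite hq0 // (_ : ((j : nat) == q) = false) //; exact: negbTE ne.
have Eform : forall i, (1 <= i <= n)%N -> exists t, (t < n)%N /\
    endpt (start i) (Defs.path Om i) = (t%:Z, t.+1%:Z).
  by move=> i /toOrd [j <-]; exists (sg j); rewrite hsg.
have Einj : forall i1 i2, (1 <= i1 <= n)%N -> (1 <= i2 <= n)%N ->
    endpt (start i1) (Defs.path Om i1) = endpt (start i2) (Defs.path Om i2) -> i1 = i2.
  move=> i1 i2 /toOrd [j1 <-] /toOrd [j2 <-]; rewrite !hsg => -[e _].
  have : sg j1 = sg j2 by apply: val_inj => /=; move: e; rewrite /=; lia.
  by move/perm_inj ->.
have form : forall i, (1 <= i <= n)%N -> exists L R, [/\ Defs.path Om i = L ++ R,
    all is_SE L, all is_FN R, count is_S L = (i == q.+1) & count is_N R = (i == p.+1)].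
  move=> i hi; have [L [R [e hL hR]]] := mixed_LR _ (hmix i hi).1.
  exists L, R; split => //.
  - by rewrite -cS // e count_cat (cS_R _ hR) addn0.
  - by rewrite -cN // e count_cat (cN_L _ hL).
have T0 : forall i, (1 <= i <= n)%N -> i != p.+1 -> i != q.+1 ->
    [/\ Defs.path Om i = wn (lead (Defs.path Om i)) (i.-1 - lead (Defs.path Om i)),
        (lead (Defs.path Om i) <= i.-1)%N &
        endpt (start i) (Defs.path Om i) = (i.-1%:Z, i%:Z)].
  move=> i hi h1 h2; have [L [R [e hL hR cs cn]]] := form i hi.
  rewrite (negbTE h1) in cn; rewrite (negbTE h2) in cs.
  have eL := SE0 _ hL cs; have eR := FN0 _ hR cn.
  have ew : Defs.path Om i = wn (size L) (size R) by rewrite e /wn -eL -eR.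
  have [_ _ _ en _] := wn_props (size L) (size R) i%:Z.
  have [t [ht et]] := Eform i hi.
  rewrite /start ew en in et; case: et => e1 e2.
  rewrite ew lead_wn /start en; split.
  - by congr wn; lia.
  - lia.
  - congr pair; lia.
have hpn : (p < n)%N := ltn_ord p.
have hqn : (q < n)%N := ltn_ord q.
case: (eqVneq p q) => [epq | npq].
  exfalso.
  have hi : (1 <= p.+1 <= n)%N by lia.
  have [L [R [e hL hR cs cn]]] := form p.+1 hi.
  rewrite epq eqxx in cs cn.
  have [a [b eL]] := SE1 _ hL cs; have [c [d eR]] := FN1 _ hR cn.
  have [lm rm en] := SN_facts a b c d p.+1%:Z.
  have [t [ht et]] := Eform p.+1 hi.
  rewrite /start e eL eR en in et; case: et => e1 e2.
  have hi' : (1 <= p <= n)%N by lia.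
  have n1 : (p : nat) != p.+1 by lia.
  have n2 : (p : nat) != q.+1 by rewrite -epq; lia.
  have [ew' hle _] := T0 p hi' n1 n2.
  set a' := lead (Defs.path Om p) in ew' hle.
  have [l' r' _ _ _] := wn_props a' (p.-1 - a') p%:Z.
  case: (leqP a a') => h.
  - move/hasPn: (HL p.+1 p hi hi' (negbT (gtn_eqF (ltnSn p))))
      => /(_ (a%:Z, p.+1%:Z - 1)).
    rewrite /start e eL eR => H; have := H lm; move/negP; apply.
    rewrite inE ew' l'; lia.
  - move/hasPn: (HR p.+1 p hi hi' (negbT (gtn_eqF (ltnSn p))))
      => /(_ ((a + b)%:Z, p.+1%:Z - 1)).
    rewrite /start e eL eR => H; have := H rm; move/negP; apply.
    rewrite inE ew' r'; lia.
have hP : (1 <= p.+1 <= n)%N by lia.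
have hQ : (1 <= q.+1 <= n)%N by lia.
have npq' : (p.+1 == q.+1) = false by rewrite eqSS; apply/negbTE.
have npq'' : (q.+1 == p.+1) = false by rewrite eqSS eq_sym; apply/negbTE.
have [L1 [R1 [e1 hL1 hR1 cs1 cn1]]] := form p.+1 hP.
rewrite npq' in cs1; rewrite eqxx in cn1.
have eL1 := SE0 _ hL1 cs1; have [be [d eR1]] := FN1 _ hR1 cn1.
have ew1 : Defs.path Om p.+1 = wN (size L1) be d by rewrite e1 /wN eR1 -eL1.
have [_ _ _ en1 _] := wN_props (size L1) be d p.+1%:Z.
have [t1 [ht1 et1]] := Eform p.+1 hP.
have et1' := et1; rewrite /start ew1 en1 in et1'; case: et1' => f1 f2.
have [L2 [R2 [e2 hL2 hR2 cs2 cn2]]] := form q.+1 hQ.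
rewrite eqxx in cs2; rewrite npq'' in cn2.
have [a [b eL2]] := SE1 _ hL2 cs2; have eR2 := FN0 _ hR2 cn2.
have ew2 : Defs.path Om q.+1 = wS a b (size R2) by rewrite e2 /wS eL2 -catA -eR2.
have [_ _ _ en2 _] := wS_props a b (size R2) q.+1%:Z.
have [t2 [ht2 et2]] := Eform q.+1 hQ.
rewrite /start ew2 en2 in et2; case: et2 => g1 g2.
have eqp : (q : nat) = p.+1.
  apply/eqP; apply/negPn/negP => hne.
  have hP2 : (1 <= p.+2 <= n)%N by lia.
  have n1 : p.+2 != p.+1 by lia.
  have n2 : p.+2 != q.+1 by rewrite eqSS eq_sym.
  have [_ _ en3] := T0 p.+2 hP2 n1 n2.
  have : p.+2 = p.+1.
    apply: Einj => //; rewrite en3 et1; congr pair; lia.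
  lia.
exists q.+1, (fun i => lead (Defs.path Om i)), b, be; split.
  split.
  - lia.
  - move=> i hi h1 h2; have h1' : i != p.+1 by move: h1; rewrite /= eqp.
    by have [] := T0 i hi h1' h2.
  - rewrite /= eqp ew1 lead_wN; lia.
  - rewrite /= ew2 lead_wS; lia.
apply: (eq_from_nth (x0:=[::])); first by rewrite size_cfg.
move=> j hj; have hj' : (1 <= j.+1 <= n)%N by lia.
have -> : nth [::] (cfg n q.+1 (fun i => lead (Defs.path Om i)) b be) j =
  Defs.path (cfg n q.+1 (fun i => lead (Defs.path Om i)) b be) j.+1 by [].
rewrite path_cfg // /cw -/(Defs.path Om j.+1) /=.
case: ifP => [/eqP ej|h1].
  rewrite ej eqp ew1 lead_wN; congr wN; lia.
case: ifP => [/eqP ej|h2].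
  rewrite ej ew2 lead_wS; congr wS; lia.
have h1' : j.+1 != p.+1 by move: h1; rewrite /= eqp => /negbT.
by have [ew _ _] := T0 j.+1 hj' h1' (negbT h2).
Qed.



Definition Jf k (a : nat -> nat) b i : point :=
  if i == k then ((a i + b)%:Z, i%:Z - 1) else ((a i)%:Z, i%:Z).

Lemma mem_junctions n k a b be z : basic n k a b be ->
  (z \in junctions (cfg n k a b be)) <-> exists2 i, (1 <= i <= n)%N & z = Jf k a b i.
Proof.
move=> hb; rewrite /junctions size_cfg; split.
  case/mapP => i; rewrite mem_iota => hi ->.
  have hi' : (1 <= i <= n)%N by lia.
  exists i => //; have [_ _ -> _ _] := @cfg_props n k a b be i hb hi'; by [].
move=> [i hi ->]; apply/mapP; exists i; first by rewrite mem_iota; lia.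
by have [_ _ -> _ _] := @cfg_props n k a b be i hb hi.
Qed.

Lemma mem_sstarts n k a b be z : basic n k a b be ->
  (z \in all_sstarts (cfg n k a b be)) = (z == ((a k)%:Z, k%:Z)).
Proof.
move=> hb; case: (hb) => /andP[hk1 hk2] _ _ _.
rewrite /all_sstarts size_cfg; apply/flatten_mapP/eqP.
  case=> i; rewrite mem_iota => hi.
  have hi' : (1 <= i <= n)%N by lia.
  have [_ _ _ _ [_ -> _ _]] := @cfg_props n k a b be i hb hi'.
  by case: ifP => [/eqP ->|]; rewrite ?inE // => /eqP.
move=> ->; exists k; first by rewrite mem_iota; lia.
have hk : (1 <= k <= n)%N by lia.
by have [_ _ _ _ [_ -> _ _]] := @cfg_props n k a b be k hb hk; rewrite eqxx inE.
Qed.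

Lemma mem_nends n k a b be z : basic n k a b be ->
  (z \in all_nends (cfg n k a b be)) = (z == ((a k.-1 + be).+1%:Z, k%:Z)).
Proof.
move=> hb; case: (hb) => /andP[hk1 hk2] _ _ _.
rewrite /all_nends size_cfg; apply/flatten_mapP/eqP.
  case=> i; rewrite mem_iota => hi.
  have hi' : (1 <= i <= n)%N by lia.
  have [_ _ _ _ [_ _ -> _]] := @cfg_props n k a b be i hb hi'.
  case: ifP => [/eqP ->|]; rewrite ?inE // => /eqP ->; congr pair; lia.
move=> ->; exists k.-1; first by rewrite mem_iota; lia.
have hk : (1 <= k.-1 <= n)%N by lia.
have [_ _ _ _ [_ _ -> _]] := @cfg_props n k a b be k.-1 hb hk; rewrite eqxx inE.
apply/eqP; congr pair; lia.
Qed.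

Definition abar k (a : nat -> nat) b i : nat :=
  if i == k.-1 then (k.-2 - a k - b)%N else (i.-1 - a i)%N.
Definition bbar k (a : nat -> nat) : nat := (a k - 1 - a k.-1)%N.
Definition betabar k (a : nat -> nat) b be : nat := (a k + b - a k.-1 - be - 1)%N.
Definition sw k i := if i == k.-1 then k else if i == k then k.-1 else i.

Lemma bar_valid n k a b be : basic n k a b be -> (a k.-1 < a k)%N -> (a k.-1 + be < a k + b)%N ->
  [/\ basic n k (abar k a b) (bbar k a) (betabar k a b be),
      (abar k a b k.-1 < abar k a b k)%N &
      (abar k a b k.-1 + betabar k a b be < abar k a b k + bbar k a)%N].
Proof.
move=> [/andP[hk1 hk2] hai hb3 hb4] s1 s2.
have e1 : (k.-1 == k.-1) = true by rewrite eqxx.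
have e2 : (k == k.-1) = false by apply/negbTE; lia.
rewrite /abar /bbar /betabar e1 e2; split; [split | lia | lia].
- lia.
- by move=> i hi /negbTE -> _; lia.
- rewrite ?e1 ?e2; lia.
- rewrite ?e1 ?e2; lia.
Qed.

Lemma swap_eq n k a b be i : basic n k a b be -> (a k.-1 < a k)%N -> (1 <= i <= n)%N ->
  Jf k (abar k a b) (bbar k a) i = rho (Jf k a b (sw k i)) /\
  Jf k (abar k a b) (bbar k a) (sw k i) = rho (Jf k a b i).
Proof.
move=> [/andP[hk1 hk2] hai hb3 hb4] s1 hi.
have e1 : (k.-1 == k.-1) = true by rewrite eqxx.
have e2 : (k == k.-1) = false by apply/negbTE; lia.
have e3 : (k.-1 == k) = false by apply/negbTE; lia.
rewrite /Jf /abar /bbar /sw /rho /=.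
case: (boolP (i == k.-1)) => [/eqP ->|h1].
  by rewrite ?e1 ?e2 ?e3 ?eqxx /=; split; congr pair; lia.
case: (boolP (i == k)) => [/eqP ->|h2].
  by rewrite ?e1 ?e2 ?e3 ?eqxx /=; split; congr pair; lia.
rewrite (negbTE h1) (negbTE h2) /=; have := hai i hi h1 h2.
by split; congr pair; lia.
Qed.

Lemma sw_range k n i : (1 < k <= n)%N -> (1 <= i <= n)%N -> (1 <= sw k i <= n)%N.
Proof. by rewrite /sw => hk hi; case: ifP => _; [lia | case: ifP => _; lia]. Qed.

Lemma rho_cfg n k a b be : basic n k a b be -> (a k.-1 < a k)%N -> (a k.-1 + be < a k + b)%N ->
  rho_related (cfg n k a b be) (cfg n k (abar k a b) (bbar k a) (betabar k a b be)).
Proof.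
move=> hb s1 s2; have [hb' _ _] := bar_valid _ _ _ _ _ hb s1 s2.
case: (hb) => hk _ _ _.
split => z.
- apply/idP/idP.
    move/(mem_junctions _ _ _ _ _ _ hb') => [i hi ->].
    apply/mapP; exists (Jf k a b (sw k i)); last by have [] := swap_eq _ _ _ _ _ _ hb s1 hi.
    by apply/(mem_junctions _ _ _ _ _ _ hb); exists (sw k i) => //; exact: sw_range.
  case/mapP => y /(mem_junctions _ _ _ _ _ _ hb) [i hi ->] ->.
  apply/(mem_junctions _ _ _ _ _ _ hb'); exists (sw k i); first exact: sw_range.
  by have [] := swap_eq _ _ _ _ _ _ hb s1 hi.
- rewrite (mem_sstarts _ _ _ _ _ _ hb'); apply/eqP/mapP.
    move=> ->; exists ((a k)%:Z, k%:Z); first by rewrite (mem_sstarts _ _ _ _ _ _ hb).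
    case/andP: hk => hk1 hk2.
    rewrite /rho /abar (_ : (k == k.-1) = false) /=; last by apply/negbTE; lia.
    case: (hb) => _ _ _ hb4; congr pair; lia.
  case=> y; rewrite (mem_sstarts _ _ _ _ _ _ hb) => /eqP -> ->.
  case/andP: hk => hk1 hk2; case: (hb) => _ _ _ hb4.
  rewrite /rho /abar (_ : (k == k.-1) = false) /=; last by apply/negbTE; lia.
  congr pair; lia.
- rewrite (mem_nends _ _ _ _ _ _ hb'); apply/eqP/mapP.
    move=> ->; exists ((a k.-1 + be).+1%:Z, k%:Z); first by rewrite (mem_nends _ _ _ _ _ _ hb).
    case/andP: hk => hk1 hk2; case: (hb) => _ _ hb3 hb4.
    rewrite /rho /abar /betabar eqxx /=; congr pair; lia.
  case=> y; rewrite (mem_nends _ _ _ _ _ _ hb) => /eqP -> ->.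
  case/andP: hk => hk1 hk2; case: (hb) => _ _ hb3 hb4.
  rewrite /rho /abar /betabar eqxx /=; congr pair; lia.
Qed.

Lemma determ n k a b be k' a' b' be' :
  basic n k a b be -> (a k.-1 < a k)%N -> (a k.-1 + be < a k + b)%N ->
  basic n k' a' b' be' -> (a' k'.-1 < a' k')%N -> (a' k'.-1 + be' < a' k' + b')%N ->
  rho_related (cfg n k a b be) (cfg n k' a' b' be') ->
  [/\ k' = k, forall i, (1 <= i <= n)%N -> a' i = abar k a b i,
      b' = bbar k a & be' = betabar k a b be].
Proof.
move=> hb s1 s2 hb' s1' s2' [hJ hS hN].
case: (hb) => /andP[hk1 hk2] hai hb3 hb4.
have [ek ak] : k' = k /\ (a' k')%:Z = k%:Z - 1 - (a k)%:Z.
  have := hS ((a' k')%:Z, k'%:Z); rewrite (mem_sstarts _ _ _ _ _ _ hb') eqxx.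
  case/esym/mapP => y; rewrite (mem_sstarts _ _ _ _ _ _ hb) => /eqP -> [e1 e2].
  split; lia.
subst k'; case: (hb') => _ hai' hb3' hb4'.
have ab : ((a' k.-1 + be').+1)%:Z = k%:Z - 1 - ((a k.-1 + be).+1)%:Z.
  have := hN ((a' k.-1 + be').+1%:Z, k%:Z); rewrite (mem_nends _ _ _ _ _ _ hb') eqxx.
  case/esym/mapP => y; rewrite (mem_nends _ _ _ _ _ _ hb) => /eqP -> /(congr1 fst) /= e1.
  lia.
have HJ : forall i, (1 <= i <= n)%N -> exists2 i0, (1 <= i0 <= n)%N &
    Jf k a' b' i = rho (Jf k a b i0).
  move=> i hi; have := hJ (Jf k a' b' i).
  have -> : Jf k a' b' i \in junctions (cfg n k a' b' be')
    by apply/(mem_junctions _ _ _ _ _ _ hb'); exists i.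
  case/esym/mapP => y /(mem_junctions _ _ _ _ _ _ hb) [i0 hi0 ->] e.
  by exists i0.
have hk1' : (1 <= k.-1 <= n)%N by lia.
have hk' : (1 <= k <= n)%N by lia.
have e2 : (k.-1 == k) = false by apply/negbTE; lia.
have [J1 J2] : (a' k.-1)%:Z = k%:Z - 2 - (a k + b)%:Z /\
               (a' k + b')%:Z = k%:Z - 2 - (a k.-1)%:Z.
  have [i0 hi0 E0] := HJ k.-1 hk1'.
  have [i1 hi1 E1] := HJ k hk'.
  move: E0 E1; rewrite /Jf /rho e2 eqxx /=.
  case: (boolP (i0 == k)) => [/eqP ->|h0]; case: (boolP (i1 == k)) => [/eqP ->|h1] /=;
    move=> E0 E1; have /= x0 := congr1 fst E0; have /= y0 := congr1 snd E0;
    have /= x1 := congr1 fst E1; have /= y1 := congr1 snd E1.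
  - lia.
  - have ei1 : i1 = k.-1 by lia.
    rewrite ei1 in x1; lia.
  - have ei0 : i0 = k.-1 by lia.
    rewrite ei0 in x0; lia.
  - have ei0 : i0 = k.-1 by lia.
    have ei1 : i1 = k.-1 by lia.
    rewrite ei0 in x0; rewrite ei1 in x1; lia.
split => //.
- move=> i hi; rewrite /abar.
  case: (boolP (i == k.-1)) => [/eqP ->|h1]; first lia.
  case: (boolP (i == k)) => [/eqP ->|h2]; first lia.
  have [i0 hi0] := HJ i hi.
  rewrite /Jf /rho (negbTE h2); case: (boolP (i0 == k)) => [/eqP ->|h0] E0;
    have /= x0 := congr1 fst E0; have /= y0 := congr1 snd E0.
    lia.
  have ei0 : i0 = i by lia.
  rewrite ei0 in x0; have := hai i hi h1 h2; lia.
- rewrite /bbar; lia.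
- rewrite /betabar; lia.
Qed.



Lemma cfg_encodes n k a b be : basic n k a b be -> encodes n (cfg n k a b be) k a b be.
Proof.
move=> hb; case: (hb) => /andP[hk1 hk2] hai hb3 hb4.
have e2 : (k == k.-1) = false by apply/negbTE; lia.
split.
- lia.
- move=> i hi h1 h2; split; first exact: hai.
  by rewrite path_cfg // /cw (negbTE h1) (negbTE h2).
- split => //; rewrite path_cfg /cw ?eqxx //; lia.
- split => //; rewrite path_cfg /cw ?e2 ?eqxx //; lia.
Qed.

Theorem lemma5 (n : nat) (Om : seq (seq step)) (k : nat) (a : nat -> nat) (b beta : nat) :
  M n 1 Om -> encodes n Om k a b beta ->
  exists Omb : seq (seq step),
    (M n 1 Omb /\ rho_related Om Omb /\
     exists (ab : nat -> nat) (bb betab : nat),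
       encodes n Omb k ab bb betab /\
       (forall i : nat, (1 <= i <= n)%N -> i != k.-1 ->
          (ab i)%:Z = i%:Z - 1 - (a i)%:Z) /\
       (ab k.-1)%:Z = k%:Z - 2 - (a k)%:Z - b%:Z /\
       bb%:Z = (a k)%:Z - 1 - (a k.-1)%:Z /\
       betab%:Z = (a k)%:Z + b%:Z - (a k.-1)%:Z - beta%:Z - 1) /\
    (forall Om' : seq (seq step), M n 1 Om' -> rho_related Om Om' -> Om' = Omb).
Proof.
move=> hM hE.
have hs : size Om = n by case: hM => -[].
have [hcfg hb] := encodes_cfg _ _ _ _ _ _ hs hE.
rewrite hcfg in hM *.
have [s1 s2] := strict_of _ _ _ _ _ hb hM.1.
have [hb' t1 t2] := bar_valid _ _ _ _ _ hb s1 s2.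
case: (hb) => /andP[hk1 hk2] hai hb3 hb4.
exists (cfg n k (abar k a b) (bbar k a) (betabar k a b beta)).
split.
  split; first exact: cfg_M _ _ _ _ _ hb' t1 t2.
  split; first exact: rho_cfg.
  exists (abar k a b), (bbar k a), (betabar k a b beta).
  split; first exact: cfg_encodes.
  split.
    move=> i hi h1; rewrite /abar (negbTE h1).
    case: (boolP (i == k)) => [/eqP ->|h2]; first lia.
    have := hai i hi h1 h2; lia.
  rewrite /abar /bbar /betabar eqxx; split; [lia | split; lia].
move=> Om' hM' hR.
have [k' [a' [b' [be' [hb'' eO]]]]] := structure _ _ hM'; subst Om'.
have [u1 u2] := strict_of _ _ _ _ _ hb'' hM'.1.
have [ek ha hbb hbe] := determ _ _ _ _ _ _ _ _ _ hb s1 s2 hb'' u1 u2 hR.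
subst k'; rewrite hbb hbe; apply: cfg_ext => i hi; exact: ha.
Qed.
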